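(* If $P\in k(t)\langle\partial_t\rangle$ is irreducible in $k(t)\langle\partial_t\rangle$, then $P$ is irreducible in $K\langle\partial_t\rangle$, i.e. $P$ has no right-hand factor $Q\in K\langle\partial_t\rangle$ with $1\le{\rm ord}(Q)<{\rm ord}(P)$.
   Context: $k$ is an algebraically closed field of characteristic zero and $K=k(t,x_1,\dots,x_n)$; $K\langle\partial_t\rangle$ (resp. $k(t)\langle\partial_t\rangle$) is the ring of linear differential operators in $\partial_t=\partial/\partial t$ with coefficients in $K$ (resp. $k(t)$). An operator of positive order is irreducible if it has no right-hand factor of order strictly between $0$ and its own order. *)

(* Defs.v *)
From HB Require Import structures.
From mathcomp Require Import all_boot all_order all_algebra.
From mathcomp Require Import mpoly.
Set Implicit Arguments. Unset Strict Implicit. Unset Printing Implicit Defensive.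
Import GRing.Theory.
Local Open Scope ring_scope.

Notation "x %:F" := (@FracField.tofrac _ x) : ring_scope.

(* K = k(t, x_1, ..., x_n): fraction field of k[X_0, ..., X_n], with t = X_0 *)
Definition Kfield (k : closedFieldType) (n : nat) : fieldType :=
  {fraction {mpoly k[n.+1]}}.

Definition tvar (n : nat) : 'I_n.+1 := ord0.

Definition Dpoly (k : closedFieldType) (n : nat) (p : {mpoly k[n.+1]}) :
  {mpoly k[n.+1]} := mderiv (tvar n) p.

Definition Dt (k : closedFieldType) (n : nat) (x : Kfield k n) : Kfield k n :=
  let r := repr x in
  let a := (frac r).1 in let b := (frac r).2 in
  ((Dpoly a * b - a * Dpoly b)%:F) / ((b ^+ 2)%:F).

Definition tpoly (k : closedFieldType) (n : nat) (p : {poly k}) : {mpoly k[n.+1]} :=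
  \sum_(i < size p) p`_i *: 'X_(tvar n) ^+ i.

Definition in_kt (k : closedFieldType) (n : nat) (x : Kfield k n) : Prop :=
  exists p q : {poly k}, q != 0 /\ x = (tpoly n p)%:F / (tpoly n q)%:F.

(* Differential operators sum_i a_i d^i (coefficients on the left) over a
   differential field (F, D) are represented by their coefficient lists
   {poly F}; the variable 'X stands for the derivation symbol d.
   The (noncommutative) product is given by the Leibniz rule
   d^i b = sum_l C(i,l) D^l(b) d^(i-l). *)
Definition opmul (F : fieldType) (D : F -> F) (P Q : {poly F}) : {poly F} :=
  \sum_(i < size P) \sum_(l < i.+1)
     (P`_i * ('C(i, l))%:R) *: (map_poly (iter l D) Q * 'X^(i - l)).

Definition ord_op (F : fieldType) (P : {poly F}) : nat := (size P).-1.

Definition coeffs_in (F : fieldType) (S : F -> Prop) (P : {poly F}) : Prop :=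
  forall i, S P`_i.

Definition right_factor_in (F : fieldType) (S : F -> Prop) (D : F -> F)
  (Q P : {poly F}) : Prop :=
  coeffs_in S Q /\ exists R, coeffs_in S R /\ P = opmul D R Q.

Definition irreducible_op_in (F : fieldType) (S : F -> Prop) (D : F -> F)
  (P : {poly F}) : Prop :=
  (0 < ord_op P)%N /\
  forall Q, right_factor_in S D Q P -> ~ (1 <= ord_op Q < ord_op P)%N.

(* Main.v *)
Require Import Defs.
From HB Require Import structures.
From mathcomp Require Import all_boot all_order all_algebra.
From mathcomp Require Import mpoly.
Import GRing.Theory.
Local Open Scope ring_scope.

Definition opmulR (A : comNzRingType) (D : A -> A) (P Q : {poly A}) : {poly A} :=
  \sum_(i < size P) \sum_(l < i.+1)
     (P`_i * ('C(i, l))%:R) *: (map_poly (iter l D) Q * 'X^(i - l)).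
Arguments opmulR {A}.

Lemma opmulE (F : fieldType) (D : F -> F) P Q : opmul D P Q = opmulR D P Q.
Proof. by []. Qed.

Lemma opmulR_bound (A : comNzRingType) (D : A -> A) (P Q : {poly A}) N :
  (size P <= N)%N -> opmulR D P Q = \sum_(i < N) \sum_(l < i.+1)
     (P`_i * ('C(i, l))%:R) *: (map_poly (iter l D) Q * 'X^(i - l)).
Proof.
move=> hN; rewrite /opmulR (big_ord_widen _ (fun i => \sum_(l < i.+1)
     (P`_i * ('C(i, l))%:R) *: (map_poly (iter l D) Q * 'X^(i - l))) hN).
rewrite big_mkcond /=; apply: eq_bigr => i _; case: ifP => // hi.
rewrite big1 // => l _; rewrite nth_default ?mul0r ?scale0r //.
by rewrite leqNgt hi.
Qed.

Lemma size_map_le (A B : nzSemiRingType) (f : A -> B) (p : {poly A}) :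
  (size (map_poly f p) <= size p)%N.
Proof. by rewrite map_polyE (leq_trans (size_Poly _)) ?size_map. Qed.

Lemma opmulR_map (A B : comNzRingType) (f : {rmorphism A -> B})
  (D1 : A -> A) (D2 : B -> B) : D2 0 = 0 -> (forall x, f (D1 x) = D2 (f x)) ->
  forall P Q, map_poly f (opmulR D1 P Q) = opmulR D2 (map_poly f P) (map_poly f Q).
Proof.
move=> hD0 hD P Q; rewrite (@opmulR_bound _ D2 (map_poly f P) (map_poly f Q) _ (size_map_le _ _ f P)) /opmulR rmorph_sum.
apply: eq_bigr => i _; rewrite rmorph_sum; apply: eq_bigr => l _.
change (map_poly f ((P`_i * 'C(i, l)%:R) *: (map_poly (iter l D1) Q * 'X^(i - l))) = ((map_poly f P)`_i * 'C(i, l)%:R) *: (map_poly (iter l D2) (map_poly f Q) * 'X^(i - l))).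
rewrite map_polyZ (rmorphM (map_poly f)); congr (_ *: (_ * _)).
- by rewrite coef_map rmorphM rmorph_nat.
- have h0 : iter l D2 0 = 0 by elim: (l : nat) => //= l' ->.
  apply: (etrans (y := map_poly (f \o iter l D1) Q)).
    exact: (esym (map_poly_comp_id0 _ _ (rmorph0 f))).
  apply: (etrans (y := map_poly (iter l D2 \o f) Q)); last first.
    exact: (map_poly_comp_id0 _ _ h0).
  apply: eq_map_poly => x /=.
  by elim: (l : nat) => [|l' IH] //=; rewrite hD IH.
- by rewrite (rmorphXn (map_poly f)); congr (_ ^+ _); exact: map_polyX.
Qed.



Section Uniq.
Variables (m : nat) (R : comNzRingType) (A : nzRingType).
Lemma morph_uniq (f g : {mpoly R[m]} -> A) :
  {morph f : x y / x + y} -> {morph f : x y / x * y} ->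
  {morph g : x y / x + y} -> {morph g : x y / x * y} ->
  (forall c, f c%:MP = g c%:MP) -> (forall i, f 'X_i = g 'X_i) -> f =1 g.
Proof.
move=> fD fM gD gM hC hX p; elim/mpolyind: p => [|c mm p _ _ IH].
  by rewrite -mpolyC0 hC.
rewrite fD gD IH -mul_mpolyC fM gM hC; congr (_ * _ + _).
rewrite mpolyXE_id; apply: (big_ind (fun x => f x = g x)).
- by rewrite -mpolyC1 hC.
- by move=> x y hx hy; rewrite fM gM hx hy.
move=> i _; elim: (mm i) => [|e IHe]; first by rewrite !expr0 -mpolyC1 hC.
by rewrite !exprS fM gM IHe hX.
Qed.
End Uniq.

Section Basic.
Variables (k : closedFieldType) (n : nat).
Local Notation MP := {mpoly k[n.+1]}.

Lemma tpolyE (p : {poly k}) : @tpoly k n p = (map_poly (@mpolyC _ k) p).['X_(tvar n)].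
Proof.
rewrite /tpoly horner_coef size_map_inj_poly //; last exact: (can_inj (@mpolyCK _ _)).
by apply: eq_bigr => i _; rewrite coef_map /= mul_mpolyC.
Qed.

Lemma tpolyD : {morph @tpoly k n : x y / x + y}.
Proof. by move=> x y; rewrite !tpolyE rmorphD hornerD. Qed.
Lemma tpolyM : {morph @tpoly k n : x y / x * y}.
Proof. by move=> x y; rewrite !tpolyE rmorphM hornerM. Qed.
Lemma tpolyC c : @tpoly k n c%:P = c%:MP.
Proof. by rewrite tpolyE map_polyC hornerC. Qed.
Lemma tpolyX : @tpoly k n 'X = 'X_(tvar n).
Proof. by rewrite tpolyE map_polyX hornerX. Qed.
Lemma tpoly0 : @tpoly k n 0 = 0.
Proof. by rewrite -polyC0 tpolyC mpolyC0. Qed.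
Lemma tpolyN : {morph @tpoly k n : x / - x}.
Proof. by move=> x; rewrite !tpolyE rmorphN hornerN. Qed.

Lemma DpolyD : {morph @Dpoly k n : x y / x + y}.
Proof. by move=> x y; rewrite /Dpoly mderivD. Qed.
Lemma DpolyM x y : Dpoly (x * y) = Dpoly x * y + x * Dpoly y :> MP.
Proof. by rewrite /Dpoly mderivM. Qed.
Lemma DpolyC c : Dpoly c%:MP = 0 :> MP.
Proof. by rewrite /Dpoly mderivC. Qed.
Lemma DpolyX (i : 'I_n.+1) : Dpoly 'X_i = (i == tvar n)%:R :> MP.
Proof.
rewrite /Dpoly mderivX mnm1E; case: eqP => [->|_]; last by rewrite scale0r.
have -> : (U_(tvar n) - U_(tvar n))%MM = 0%MM.
  by apply/mnmP => j; rewrite mnmBE subnn mnmE.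
by rewrite mpolyX0 scale1r.
Qed.

Lemma Dpoly_tpoly p : Dpoly (@tpoly k n p) = @tpoly k n p^`().
Proof.
elim/poly_ind: p => [|p c IH]; first by rewrite deriv0 tpoly0 /Dpoly mderiv0.
rewrite derivMXaddC !tpolyD !tpolyM tpolyC DpolyD DpolyM DpolyC IH tpolyX DpolyX eqxx.
by rewrite addr0 mulr1 addrC.
Qed.

End Basic.

Section Ev.
Variables (k : closedFieldType) (n : nat) (c : 'I_n.+1 -> k).
Local Notation MP := {mpoly k[n.+1]}.
Definition vv (i : 'I_n.+1) : {poly k} := if i == tvar n then 'X else (c i)%:P.
Definition ev (a : MP) : {poly k} := mmap (@polyC k) vv a.

Lemma evD : {morph ev : x y / x + y}.
Proof. by move=> x y; rewrite /ev mmapD. Qed.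
Lemma evM : {morph ev : x y / x * y}.
Proof. by move=> x y; rewrite /ev (rmorphM (mmap (@polyC k) vv)). Qed.
Lemma evC a : ev a%:MP = a%:P.
Proof. by rewrite /ev mmapC. Qed.
Lemma evXi i : ev 'X_i = vv i.
Proof. by rewrite /ev mmapX mmap1U. Qed.
Lemma ev0 : ev 0 = 0. Proof. by rewrite /ev mmap0. Qed.
Lemma evN : {morph ev : x / - x}. Proof. by move=> x; rewrite /ev mmapN. Qed.
Lemma evB : {morph ev : x y / x - y}. Proof. by move=> x y; rewrite /ev mmapB. Qed.
Lemma ev1 : ev 1 = 1. Proof. by rewrite -mpolyC1 evC. Qed.
Lemma evXn x e : ev (x ^+ e) = ev x ^+ e.
Proof. by rewrite /ev rmorphXn. Qed.

Lemma ev_tpoly p : ev (@tpoly k n p) = p.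
Proof.
elim/poly_ind: p => [|p a IH]; first by rewrite tpoly0 ev0.
by rewrite tpolyD tpolyM tpolyC tpolyX evD evM evC evXi IH /vv eqxx.
Qed.

Lemma ev_Dpoly a : ev (Dpoly a) = (ev a)^`().
Proof.
pose Pr (a : MP) := ev (Dpoly a) = (ev a)^`().
have PD x y : Pr x -> Pr y -> Pr (x + y).
  by rewrite /Pr => hx hy; rewrite DpolyD !evD hx hy derivD.
have PM x y : Pr x -> Pr y -> Pr (x * y).
  by rewrite /Pr => hx hy; rewrite DpolyM !evD !evM hx hy derivM.
have PC a0 : Pr a0%:MP by rewrite /Pr DpolyC evC derivC ev0.
have PX i : Pr 'X_i.
  rewrite /Pr DpolyX evXi /vv; case: eqP => _.
    by rewrite derivX -mpolyC1 evC.
  by rewrite derivC ev0.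
change (Pr a); elim/mpolyind: a => [|a0 mm p _ _ IH].
  by rewrite -mpolyC0.
apply: (PD) => //; rewrite -mul_mpolyC; apply: (PM) => //.
rewrite mpolyXE_id; apply: (big_ind Pr); first by rewrite -mpolyC1.
  exact: (PM).
move=> i _; elim: (mm i) => [|e IHe]; first by rewrite expr0 -mpolyC1.
by rewrite exprS; apply: (PM).
Qed.
End Ev.

From mathcomp Require Import ring.
Lemma frac_repr (R : idomainType) (x : {fraction R}) :
  x = (\n_(repr x))%:F / (\d_(repr x))%:F.
Proof.
rewrite -[x in LHS]reprK; set r := repr x.
unlock tofrac. rewrite -[_^-1]/(FracField.inv _) -[_ * _]/(FracField.mul _ _).
rewrite !piE. apply/eqmodP => /=. rewrite FracField.equivfE.
rewrite !numden_Ratio ?oner_neq0 ?denom_ratioP ?mulf_neq0 ?oner_neq0 ?denom_ratioP //.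
by rewrite !mulr1 !mul1r mulrC.
Qed.

Lemma frac_eq (R : idomainType) (a b a1 b1 : R) : b != 0 -> b1 != 0 ->
  (a%:F / b%:F == a1%:F / b1%:F :> {fraction R}) = (a * b1 == a1 * b).
Proof.
move=> hb hb1; rewrite eqr_div ?tofrac_eq0 // -!tofracM tofrac_eq //.
Qed.

Section DtS.
Variables (k : closedFieldType) (n : nat).
Local Notation MP := {mpoly k[n.+1]}.
Local Notation D := (@Dpoly k n).

Lemma Dt_frac (a b : MP) : b != 0 ->
  @Dt k n (a%:F / b%:F) = ((D a * b - a * D b)%:F) / ((b ^+ 2)%:F).
Proof.
move=> hb; rewrite /Dt.
set x := (a%:F / b%:F : Kfield k n).
have hb1 : \d_(repr x) != 0 := denom_ratioP _.
have e := @frac_repr _ x.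
move: (\n_(repr x)) (\d_(repr x)) hb1 e => a1 b1 hb1 e.
have /eqP h1 : a * b1 == a1 * b by rewrite -frac_eq // -e.
have h2 : D a * b1 + a * D b1 = D a1 * b + a1 * D b.
  by rewrite -!DpolyM h1.
apply/eqP; rewrite frac_eq ?expf_neq0 //; apply/eqP.
apply/eqP; rewrite -subr_eq0; apply/eqP.
have -> : (D a1 * b1 - a1 * D b1) * b ^+ 2 - (D a * b - a * D b) * b1 ^+ 2 =
   - (b * b1 * ((D a * b1 + a * D b1) - (D a1 * b + a1 * D b)) +
     (a1 * b - a * b1) * (b1 * D b + b * D b1)) by ring.
by rewrite h2 h1 !subrr mulr0 mul0r addr0 oppr0.
Qed.
End DtS.

Section Point.
Variable k : closedFieldType.

Lemma nonroot (q : {poly k}) : q != 0 -> exists t, q.[t] != 0.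
Proof.
move=> hq.
have hs : size (q * 'X + 1) != 1%N.
  rewrite size_MXaddC (negbTE hq) /= eqSS -lt0n size_poly_gt0 //.
have [t /rootP rt] := closed_rootP _ hs.
exists t; apply/eqP => h; move: rt; rewrite hornerD hornerM h mul0r hornerC add0r.
by move/eqP; rewrite oner_eq0.
Qed.

Lemma nz_point m (p : {mpoly k[m]}) : p != 0 -> exists w : 'I_m -> k, p.@[w] != 0.
Proof.
elim: m p => [|m IH] p hp.
  exists (fun _ => 0); rewrite (nvar0_mpolyC p) mevalC.
  by apply: contra hp => /eqP e; rewrite (nvar0_mpolyC p) e mpolyC0.
pose h (i : 'I_m.+1) : {poly {mpoly k[m]}} :=
  match unlift ord_max i with Some j => ('X_j)%:P | None => 'X end.
pose psi (p : {mpoly k[m.+1]}) := mmap ((@polyC _) \o (@mpolyC m k)) h p.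
pose B (q : {poly {mpoly k[m]}}) : {mpoly k[m.+1]} :=
  (map_poly (@mwiden m k) q).['X_ord_max].
have psiD : {morph psi : x y / x + y} by move=> x y; rewrite /psi rmorphD.
have psiM : {morph psi : x y / x * y} by move=> x y; rewrite /psi rmorphM.
have psiC c : psi c%:MP = (c%:MP)%:P by rewrite /psi mmapC.
have psiX i : psi 'X_i = h i by rewrite /psi mmapX mmap1U.
have BK : B \o psi =1 id.
  apply: morph_uniq.
  - by move=> x y /=; rewrite psiD /B rmorphD hornerD.
  - by move=> x y /=; rewrite psiM /B rmorphM hornerM.
  - by [].
  - by [].
  - move=> c /=; rewrite psiC /B map_polyC hornerC; exact: mwidenC.
  move=> i /=; rewrite psiX /h /B.
  case: unliftP => [j ->|->]; last by rewrite map_polyX hornerX.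
  rewrite map_polyC hornerC.
  have -> : 'X_(lift ord_max j) = 'X_[mnmwiden U_(j)] :> {mpoly k[m.+1]}.
    rewrite mnmwiden1; congr 'X_[U_(_)]; apply: val_inj => /=.
    by rewrite /bump leqNgt ltn_ord.
  exact: mwidenX.
have hq : psi p != 0.
  by apply: contra hp => /eqP e; have := BK p; rewrite /= e /B map_poly0 horner0 => <-.
have hl : lead_coef (psi p) != 0 by rewrite lead_coef_eq0.
have [w' hw'] := IH _ hl.
pose q2 := map_poly (meval w') (psi p).
have hq2 : q2 != 0.
  rewrite -lead_coef_eq0 /q2 lead_coef_map_id0 //; exact: meval0.
have [t ht] := nonroot _ hq2.
pose w (i : 'I_m.+1) := match unlift ord_max i with Some j => w' j | None => t end.
exists w.
have -> : p.@[w] = (map_poly (meval w') (psi p)).[t].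
  apply: (@morph_uniq _ _ _ (meval w)
            (fun p => (map_poly (meval w') (psi p)).[t])).
  - by move=> x y; rewrite mevalD.
  - by move=> x y; rewrite rmorphM.
  - by move=> x y /=; rewrite psiD rmorphD hornerD.
  - by move=> x y /=; rewrite psiM rmorphM hornerM.
  - move=> c /=; rewrite psiC map_polyC hornerC mevalC; exact: (esym (mevalC _ _)).
  move=> i /=; rewrite psiX /h mevalXU /w.
  case: unliftP => [j _|_]; last by rewrite map_polyX hornerX.
  rewrite map_polyC hornerC; exact: (esym (mevalXU _ _)).
exact: ht.
Qed.
End Point.

From Stdlib Require Import ClassicalEpsilon.
Lemma fracB (F : fieldType) (x y u v : F) : u != 0 -> v != 0 -> x/u - y/v = (x*v - y*u)/(u*v).
Proof. by move=> hu hv; field; apply/andP. Qed.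


Section Spec.
Variables (k : closedFieldType) (n : nat) (c : 'I_n.+1 -> k).
Local Notation MP := {mpoly k[n.+1]}.
Local Notation K := (Kfield k n).
Local Notation tp := (@tpoly k n).

Definition E (a : MP) : MP := tp (@ev k n c a).
Lemma ED : {morph E : x y / x + y}. Proof. by move=> x y; rewrite /E evD tpolyD. Qed.
Lemma EM : {morph E : x y / x * y}. Proof. by move=> x y; rewrite /E evM tpolyM. Qed.
Lemma EN : {morph E : x / - x}. Proof. by move=> x; rewrite /E evN tpolyN. Qed.
Lemma EB : {morph E : x y / x - y}. Proof. by move=> x y; rewrite ED EN. Qed.
Lemma E0 : E 0 = 0. Proof. by rewrite /E ev0 tpoly0. Qed.
Lemma E1 : E 1 = 1. Proof. by rewrite /E ev1 -polyC1 tpolyC mpolyC1. Qed.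
Lemma EXn x e : E (x ^+ e) = E x ^+ e.
Proof. by elim: e => [|e IH]; rewrite ?expr0 ?E1 // !exprS EM IH. Qed.
Lemma E_Dpoly a : E (Dpoly a) = Dpoly (E a).
Proof. by rewrite /E ev_Dpoly Dpoly_tpoly. Qed.
Lemma E_tpoly p : E (tp p) = tp p.
Proof. by rewrite /E ev_tpoly. Qed.
Lemma E_neq0 b : E b != 0 -> b != 0.
Proof. by apply: contra => /eqP ->; rewrite E0. Qed.

Definition good (y : K) := exists ab : MP * MP, E ab.2 != 0 /\ y = ab.1%:F / ab.2%:F.
Definition goodb (y : K) : bool :=
  if excluded_middle_informative (good y) then true else false.
Lemma goodP y : reflect (good y) (goodb y).
Proof. by rewrite /goodb; case: excluded_middle_informative => h; constructor. Qed.

Definition phi (y : K) : K :=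
  match excluded_middle_informative (good y) with
  | left h => let ab := proj1_sig (constructive_indefinite_description _ h) in
              (E ab.1)%:F / (E ab.2)%:F
  | right _ => 0 end.

Lemma phiE a b : E b != 0 -> phi (a%:F / b%:F) = (E a)%:F / (E b)%:F.
Proof.
move=> hb; rewrite /phi; case: excluded_middle_informative => [h|[]]; last first.
  by exists (a, b).
case: constructive_indefinite_description => [[a1 b1] /= [hb1 e]].
apply/eqP; rewrite frac_eq //; apply/eqP.
move/eqP: e; have nb := E_neq0 _ hb; have nb1 := E_neq0 _ hb1; rewrite frac_eq //.
move=> /eqP e.
by rewrite -!EM e.
Qed.

Lemma phi_repr (y : K) : E \d_(repr y) != 0 ->
  phi y = (E \n_(repr y))%:F / (E \d_(repr y))%:F.
Proof. by move=> h; rewrite -phiE // -frac_repr. Qed.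

Lemma good_frac a b : E b != 0 -> goodb (a%:F / b%:F).
Proof. by move=> hb; apply/goodP; exists (a, b). Qed.

Lemma good_subring : subring_closed goodb.
Proof.
split.
- by move: (good_frac 1 1); rewrite E1 oner_eq0 tofrac1 divr1; apply.
- move=> x y /goodP [[a b] /= [hb ->]] /goodP [[a1 b1] /= [hb1 ->]].
  have -> : a%:F / b%:F - a1%:F / b1%:F = (a * b1 - a1 * b)%:F / (b * b1)%:F :> K.
    by rewrite tofracB !tofracM fracB // tofrac_eq0 ?(E_neq0 _ hb) ?(E_neq0 _ hb1).
  by apply: good_frac; rewrite EM mulf_neq0.
- move=> x y /goodP [[a b] /= [hb ->]] /goodP [[a1 b1] /= [hb1 ->]].
  have -> : a%:F / b%:F * (a1%:F / b1%:F) = (a * a1)%:F / (b * b1)%:F :> K.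
    by rewrite !tofracM mulf_div.
  by apply: good_frac; rewrite EM mulf_neq0.
Qed.

HB.instance Definition _ := GRing.isSubringClosed.Build K goodb good_subring.
Record S := mkS { sv : K; svP : goodb sv }.
HB.instance Definition _ := [isSub for sv].
HB.instance Definition _ := [Choice of S by <:].
HB.instance Definition _ := [SubChoice_isSubComNzRing of S by <:].

Lemma good_Dt y : goodb y -> goodb (@Dt k n y).
Proof.
move=> /goodP [[a b] /= [hb ->]]; rewrite Dt_frac ?(E_neq0 _ hb) //.
by apply: good_frac; rewrite EXn expf_neq0.
Qed.

Lemma phi_Dt y : goodb y -> phi (@Dt k n y) = @Dt k n (phi y).
Proof.
move=> /goodP [[a b] /= [hb ->]]; rewrite Dt_frac ?(E_neq0 _ hb) //.
rewrite phiE ?EXn ?expf_neq0 // phiE // Dt_frac //.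
by rewrite EB !EM !E_Dpoly.
Qed.

Lemma phiB x y : goodb x -> goodb y -> phi (x - y) = phi x - phi y.
Proof.
move=> /goodP [[a b] /= [hb ->]] /goodP [[a1 b1] /= [hb1 ->]].
have nb := E_neq0 _ hb; have nb1 := E_neq0 _ hb1.
have hbb : E (b * b1) != 0 by rewrite EM mulf_neq0.
rewrite fracB ?tofrac_eq0 // -!tofracM -tofracB (phiE _ _ hbb) (phiE _ _ hb) (phiE _ _ hb1).
by rewrite fracB ?tofrac_eq0 // EB !EM tofracB !tofracM.
Qed.

Lemma phiM x y : goodb x -> goodb y -> phi (x * y) = phi x * phi y.
Proof.
move=> /goodP [[a b] /= [hb ->]] /goodP [[a1 b1] /= [hb1 ->]].
have hbb : E (b * b1) != 0 by rewrite EM mulf_neq0.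
rewrite mulf_div -!tofracM (phiE _ _ hbb) (phiE _ _ hb) (phiE _ _ hb1).
by rewrite mulf_div !EM !tofracM.
Qed.

Lemma phi1 : phi 1 = 1.
Proof. by rewrite -(divr1 1) -tofrac1 phiE E1 ?oner_eq0 // tofrac1 divr1. Qed.

Definition DS (y : S) : S := @mkS (@Dt k n (sv y)) (good_Dt _ (svP y)).
Definition phiS (y : S) : K := phi (sv y).

Lemma phiS_zmod : zmod_morphism phiS.
Proof. by move=> x y; rewrite /phiS phiB ?svP // -[x - y]/(val (x - y)) rmorphB. Qed.
Lemma phiS_monoid : monoid_morphism phiS.
Proof.
split; first by rewrite /phiS -[sv 1]/(val (1 : S)) rmorph1 phi1.
by move=> x y; rewrite /phiS phiM ?svP // -[sv (x * y)]/(val (x * y)) rmorphM.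
Qed.

HB.instance Definition _ := GRing.isZmodMorphism.Build S K phiS phiS_zmod.
HB.instance Definition _ := GRing.isMonoidMorphism.Build S K phiS phiS_monoid.

Lemma Dt0 : @Dt k n 0 = 0.
Proof.
have -> : (0 : K) = (0 : MP)%:F / (1 : MP)%:F by rewrite tofrac0 mul0r.
by rewrite Dt_frac ?oner_eq0 // /Dpoly mderiv0 !mul0r subrr tofrac0 mul0r.
Qed.

Lemma phi_in_kt y : in_kt (phi y).
Proof.
case: (goodP y) => [[[a b] /= [hb ->]]|ng].
  rewrite phiE //; exists (@ev k n c a), (@ev k n c b); split => //.
  by apply: contra hb => /eqP e; rewrite /E e tpoly0.
rewrite /phi; case: excluded_middle_informative => // _.
exists 0, 1; split; first exact: oner_neq0.
by rewrite tpoly0 tofrac0 mul0r.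
Qed.

Lemma phi_kt y : in_kt y -> goodb y /\ phi y = y.
Proof.
move=> [p [q [hq ->]]].
have hE : E (tp q) != 0.
  rewrite E_tpoly; apply: contra hq => /eqP e.
  by rewrite -(ev_tpoly k n c q) e ev0.
by split; [apply: good_frac | rewrite phiE // !E_tpoly].
Qed.

Lemma lift_poly (p : {poly K}) : (forall i, goodb p`_i) ->
  exists p' : {poly S}, map_poly val p' = p.
Proof.
move=> hp; exists (\poly_(i < size p) insubd (0 : S) p`_i).
apply/polyP => i; rewrite coef_map_id0 ?rmorph0 // coef_poly.
case: ifP => hi; first by apply: insubdK; exact: hp.
by rewrite rmorph0 nth_default // leqNgt hi.
Qed.
End Spec.

Lemma ev_horner (k : closedFieldType) n (w : 'I_n.+1 -> k) (g : {mpoly k[n.+1]}) :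
  (@ev k n w g).[w (tvar n)] = g.@[w].
Proof.
apply: (@morph_uniq _ _ _ (fun g => (@ev k n w g).[w (tvar n)]) (meval w)).
- by move=> x y; rewrite evD hornerD.
- by move=> x y; rewrite evM hornerM.
- by move=> x y; rewrite mevalD.
- by move=> x y; rewrite rmorphM.
- by move=> a; rewrite evC hornerC mevalC.
move=> i; rewrite evXi mevalXU /vv; case: eqP => [->|_].
  by rewrite hornerX.
by rewrite hornerC.
Qed.

Theorem mainTheorem12 (k : closedFieldType) (k_char0 : [pchar k] =i pred0)
  (n : nat) (P : {poly Kfield k n}) :
  coeffs_in (@in_kt k n) P ->
  irreducible_op_in (@in_kt k n) (@Dt k n) P ->
  irreducible_op_in (fun _ : Kfield k n => True) (@Dt k n) P.
Proof.
move=> hP [ordP irr]; split => // Q [_ [R [_ eP]]] /andP [h1 h2].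
have hQ : Q != 0 by apply: contraTneq h1 => ->; rewrite /ord_op size_poly0.
have hlQ : lead_coef Q != 0 by rewrite lead_coef_eq0.
set nl := \n_(repr (lead_coef Q)).
have hnl : nl != 0.
  apply: contra hlQ => /eqP e; rewrite [lead_coef Q]frac_repr -/nl e tofrac0 mul0r //.
pose dens := [seq \d_(repr x) | x <- (R : seq _) ++ (Q : seq _)].
pose g := \prod_(d <- nl :: dens) d.
have hg : g != 0.
  rewrite /g prodf_seq_neq0; apply/allP => d /=; rewrite inE => /orP [/eqP -> //|].
  by move=> /mapP [x _ ->]; exact: denom_ratioP.
have [w hw] := nz_point _ _ _ hg.
set c := w.
have hEg : E k n c g != 0.
  rewrite /E; apply/eqP => e.
  have : @ev k n c g = 0 by rewrite -(ev_tpoly k n c (@ev k n c g)) e ev0.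
  by move=> e2; move: hw; rewrite -ev_horner /c e2 horner0 eqxx.
have Eprod : E k n c g = \prod_(d <- nl :: dens) E k n c d.
  by rewrite /g (big_morph (E k n c) (EM k n c) (E1 k n c)).
have hall : forall d, d \in nl :: dens -> E k n c d != 0.
  move: hEg; rewrite Eprod prodf_seq_neq0 => /allP H d hd.
  exact: (H d hd).
have goodco : forall x, (x \in (R : seq _) ++ (Q : seq _)) -> goodb k n c x.
  move=> x hx; rewrite [x]frac_repr; apply: good_frac; apply: hall.
  by rewrite inE; apply/orP; right; apply/mapP; exists x.
have g0 : goodb k n c 0.
  by move: (good_frac k n c 0 1); rewrite E1 oner_eq0 tofrac0 mul0r; apply.
have goodR : forall i, goodb k n c R`_i.
  move=> i; case: (ltnP i (size R)) => hi.
    by apply: goodco; rewrite mem_cat mem_nth.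
  by rewrite nth_default.
have goodQ : forall i, goodb k n c Q`_i.
  move=> i; case: (ltnP i (size Q)) => hi.
    by apply: goodco; rewrite mem_cat mem_nth ?orbT.
  by rewrite nth_default.
have [R' eR] := lift_poly _ _ _ _ goodR.
have [Q' eQ] := lift_poly _ _ _ _ goodQ.
pose P' := opmulR (DS k n c) R' Q'.
have eP' : map_poly val P' = P.
  by rewrite /P' (@opmulR_map _ _ val (DS k n c) (@Dt k n) (Dt0 k n) (fun x => erefl) R' Q') eR eQ eP.
have ePs : map_poly (phiS k n c) P' = P.
  apply/polyP => j; rewrite coef_map.
  change (phi k n c (val P'`_j) = P`_j).
  have -> : val P'`_j = (map_poly val P')`_j by rewrite coef_map.
  by rewrite eP'; have [_ ->] := phi_kt k n c _ (hP j).
have eF := @opmulR_map _ _ (phiS k n c) (DS k n c) (@Dt k n) (Dt0 k n) (fun x => phi_Dt k n c _ (svP k n c x)) R' Q'.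
rewrite -/P' ePs in eF.
have szQ' : size Q' = size Q.
  by rewrite -eQ size_map_inj_poly //; exact: val_inj.
have hlead : phiS k n c (lead_coef Q') != 0.
  change (phi k n c (val (lead_coef Q')) != 0).
  have -> : val (lead_coef Q') = lead_coef Q.
    by rewrite /lead_coef szQ' -eQ coef_map.
  have hd : E k n c \d_(repr (lead_coef Q)) != 0.
    apply: hall; rewrite inE; apply/orP; right; apply/mapP.
    exists (lead_coef Q) => //; rewrite mem_cat; apply/orP; right.
    by rewrite /lead_coef mem_nth // prednK // size_poly_gt0.
  rewrite (phi_repr k n c _ hd); apply: mulf_neq0.
    by rewrite tofrac_eq0; apply: hall; rewrite inE eqxx.
  by rewrite invr_eq0 tofrac_eq0.
apply: (irr (map_poly (phiS k n c) Q')).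
  split; first by move=> i; rewrite coef_map; exact: phi_in_kt.
  exists (map_poly (phiS k n c) R'); split.
    by move=> i; rewrite coef_map; exact: phi_in_kt.
  by rewrite opmulE.
by rewrite /ord_op size_map_poly_id0 // szQ'; apply/andP.
Qed.
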